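(* Let $n=2$ and assume $\lfloor (M_1+M_2)/p\rfloor=1$ (ample reduction). Let $I^{[1]}(z_1,z_2)\in\mathbb{F}_p[z_1,z_2]^2$ be the coefficient of $x^{p-1}$ in $(x-z_1)^{M_1}(x-z_2)^{M_2}\Big(\frac{e_1}{x-z_1}+\frac{e_2}{x-z_2}\Big)$. Then $$I^{[1]}(z_1,z_2)=(-1)^{M_2}(z_2-z_1)^{M_1+M_2-p}\frac{\Gamma_{\mathbb{F}_p}(M_1+1)\Gamma_{\mathbb{F}_p}(M_2+1)}{\Gamma_{\mathbb{F}_p}(M_1+M_2-p+1)}\Big(\frac{e_1}{M_1}-\frac{e_2}{M_2}\Big) =(-1)^{M_1}(z_1-z_2)^{M_1+M_2-p}\frac{\Gamma_{\mathbb{F}_p}(M_1+1)\Gamma_{\mathbb{F}_p}(M_2+1)}{\Gamma_{\mathbb{F}_p}(M_1+M_2-p+1)}\Big(\frac{e_2}{M_2}-\frac{e_1}{M_1}\Big).$$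
   Context: Let $p,q$ be primes with $p>q$ and $p>2$. Fix positive integers $m_1,m_2<q$, and let $M_i$ be the least positive integer with $M_i\equiv -m_iq^{-1}\pmod p$ ($1\le M_i\le p-1$); in formulas over $\mathbb{F}_p$, $M_i$ denotes its residue. $e_1,e_2$ is the standard basis of $\mathbb{F}_p^2$. For an integer $1\le x\le p$, $\Gamma_{\mathbb{F}_p}(x)\in\mathbb{F}_p$ denotes the residue of $(-1)^{x-1}(x-1)!$. *)

(* Defs.v *)
From HB Require Import structures.
From mathcomp Require Import all_boot all_order all_algebra.
Set Implicit Arguments. Unset Strict Implicit. Unset Printing Implicit Defensive.
Import Order.TTheory GRing.Theory Num.Theory.
Local Open Scope ring_scope.

Definition GammaF (p : nat) (x : nat) : 'F_p :=
  (-1) ^+ (x.-1) * (x.-1)`!%:R.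

(* Bivariate polynomial ring F_p[z1,z2], realised as {poly {poly F_p}}. *)
Notation Fz p := {poly {poly 'F_p}}.

Definition z1 (p : nat) : Fz p := ('X : {poly 'F_p})%:P.
Definition z2 (p : nat) : Fz p := 'X.

Definition e1 (p : nat) : 'rV[Fz p]_2 := delta_mx 0 0.
Definition e2 (p : nat) : 'rV[Fz p]_2 := delta_mx 0 1.

(* I^[1](z1,z2): coefficient of x^(p-1) in
   (x-z1)^M1 (x-z2)^M2 (e1/(x-z1) + e2/(x-z2))
   = (x-z1)^(M1-1)(x-z2)^M2 e1 + (x-z1)^M1 (x-z2)^(M2-1) e2   (M1,M2 >= 1). *)
Definition I1 (p M1 M2 : nat) : 'rV[Fz p]_2 :=
  ((('X - (z1 p)%:P) ^+ M1.-1 * ('X - (z2 p)%:P) ^+ M2 : {poly Fz p})`_(p.-1))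
     *: e1 p
  + ((('X - (z1 p)%:P) ^+ M1 * ('X - (z2 p)%:P) ^+ M2.-1 : {poly Fz p})`_(p.-1))
     *: e2 p.

Definition cst (p : nat) (c : 'F_p) : Fz p := c%:P%:P.
Arguments cst p c : clear implicits.

(* Main.v *)
Require Import Defs.
From HB Require Import structures.
From mathcomp Require Import all_boot all_order all_algebra.
From mathcomp Require Import zify ring.
Import Order.TTheory GRing.Theory Num.Theory.
Local Open Scope ring_scope.

Lemma ndvd_fact p n : prime p -> (n < p)%N -> ~~ (p %| n`!)%N.
Proof.
move=> pp; elim: n => [|n IH] ltn; first by rewrite fact0 dvdn1; apply/eqP => e; rewrite e in pp.
rewrite factS Euclid_dvdM // negb_or IH ?andbT; last by apply: ltnW.
apply/negP => /dvdn_leq; rewrite ltn0Sn => /(_ isT); rewrite leqNgt ltn.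
by [].
Qed.

Lemma dvd_bin_mid p m : prime p -> (p.-1 < m)%N -> (m <= (p.-1).*2)%N ->
  (p %| 'C(m, p.-1))%N.
Proof.
move=> pp lt le.
have p0 := prime_gt0 pp.
have H := bin_fact (ltnW lt).
have: (p %| m`!)%N by apply: dvdn_fact; rewrite p0 /=; lia.
rewrite -H !Euclid_dvdM // (negbTE (@ndvd_fact p _ pp _)); last by lia.
by rewrite (negbTE (@ndvd_fact p _ pp _)) ?orbF //; lia.
Qed.

Lemma coef_XsubC_exp (R : comNzRingType) (c : R) m i :
  (('X - c%:P) ^+ m)`_i = (-c) ^+ (m - i) *+ 'C(m, i).
Proof.
rewrite addrC -polyCN exprDn coef_sum.
case: (ltnP m i) => [lt|le].
  rewrite bin_small // mulr0n big1 // => j _.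
  rewrite coefMn -polyC_exp coefCM coefXn; case: eqP => [eji|]; last by rewrite mulr0 mul0rn.
  by move: (ltn_ord j); rewrite -eji; lia.
rewrite (bigD1 (@Ordinal m.+1 i le)) //= big1 ?addr0.
  by rewrite coefMn -polyC_exp coefCM coefXn eqxx mulr1.
move=> j /eqP nji; rewrite coefMn -polyC_exp coefCM coefXn.
case: eqP => [eij|]; last by rewrite mulr0 mul0rn.
by exfalso; apply: nji; apply: val_inj.
Qed.

Lemma coef_pm1 (R : comNzRingType) p (c : R) m : p \in [pchar R] ->
  (m <= (p.-1).*2)%N -> (('X - c%:P) ^+ m)`_(p.-1) = (m == p.-1)%:R.
Proof.
move=> pR le; have pp := pcharf_prime pR.
rewrite coef_XsubC_exp.
case: (ltngtP m p.-1) => [lt|gt|->]; first by rewrite bin_small.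
  rewrite -mulr_natr; move: (@dvd_bin_mid p m pp gt le); rewrite (dvdn_pcharf pR) => /eqP ->.
  by rewrite mulr0.
by rewrite subnn expr0 binn.
Qed.

Lemma coef_main (R : comNzRingType) p (u v : R) a b : p \in [pchar R] ->
  (a <= p.-1)%N -> (p.-1 <= a + b)%N -> (a + b <= (p.-1).*2)%N ->
  ((('X - u%:P) ^+ a * ('X - v%:P) ^+ b : {poly R}))`_(p.-1)
    = (u - v) ^+ (a + b - p.-1) *+ 'C(b, a + b - p.-1).
Proof.
move=> pR ha hb hc.
set y := 'X - u%:P.
have -> : 'X - v%:P = y + (u - v)%:P by rewrite /y polyCB addrA subrK.
rewrite [(y + _) ^+ b]exprDn mulr_sumr coef_sum.
have i0lt : (a + b - p.-1 < b.+1)%N by lia.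
rewrite (bigD1 (Ordinal i0lt)) //= big1 ?addr0.
  rewrite mulrnAr mulrA -exprD.
rewrite coefMn -polyC_exp coefMC coef_pm1 //; last by lia.
  have -> : (a + (b - (a + b - p.-1)) == p.-1)%N by apply/eqP; lia.
  by rewrite mul1r.
move=> j /eqP nj.
rewrite mulrnAr mulrA -exprD coefMn -polyC_exp coefMC coef_pm1 //; last first.
  by move: (ltn_ord j); lia.
case: eqP => [e|]; last by rewrite mul0r mul0rn.
by exfalso; apply: nj; apply: val_inj => /=; move: (ltn_ord j) e; lia.
Qed.

Lemma Wfact p a : prime p -> (a <= p.-1)%N ->
  ((a`! * (p.-1 - a)`!)%:R : 'F_p) = (-1) ^+ a.+1.
Proof.
move=> pp; have p1 := prime_gt1 pp.
elim: a => [|a IH] le.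
  rewrite fact0 mul1n subn0 expr1.
  have := Wilson p1; rewrite pp => /esym.
  by rewrite (dvdn_pcharf (pchar_Fp pp)) -natr1 addr_eq0 => /eqP.
have IH' := IH (ltnW le).
have e : (p.-1 - a = (p.-1 - a.+1).+1)%N by lia.
rewrite e factS natrM in IH'.
have eN : ((p.-1 - a.+1).+1%:R : 'F_p) = - (a.+1)%:R.
  apply/eqP; rewrite -subr_eq0 opprK -natrD.
  have -> : ((p.-1 - a.+1).+1 + a.+1 = p)%N by lia.
  by rewrite pchar_Fp_0.
rewrite natrM eN in IH'.
rewrite factS !natrM exprS -IH'.
ring.
Qed.

Lemma natf_neq0 p n : prime p -> (0 < n < p)%N -> (n%:R : 'F_p) != 0.
Proof.
move=> pp /andP [h0 h1]; rewrite -(dvdn_pcharf (pchar_Fp pp)).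
by apply/negP => /dvdn_leq => /(_ h0); rewrite leqNgt h1.
Qed.

Lemma factf_neq0 p n : prime p -> (n < p)%N -> (n`!%:R : 'F_p) != 0.
Proof.
by move=> pp h; rewrite -(dvdn_pcharf (pchar_Fp pp)); apply: ndvd_fact.
Qed.

Lemma sign_sq (R : comNzRingType) n : ((-1) ^+ n * (-1) ^+ n : R) = 1.
Proof. by rewrite -expr2 sqrr_sign. Qed.

Lemma K1 p M1 M2 : prime p -> (0 < M1)%N -> (M1 <= p.-1)%N -> (M2 <= p.-1)%N ->
  (p <= M1 + M2)%N ->
  ('C(M2, M1 + M2 - p)%:R : 'F_p) = (-1) ^+ M2 * (-1) ^+ (M1 + M2 - p) *
    (GammaF p M1.+1 * GammaF p M2.+1 / GammaF p (M1 + M2 - p).+1) * (M1%:R)^-1.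
Proof.
move=> pp h1 h2 h3 h4; have p1 := prime_gt1 pp.
set k := (M1 + M2 - p)%N.
rewrite /GammaF /=.
have hF2 : (M2`!%:R : 'F_p) = 'C(M2, k)%:R * k`!%:R * (p.-1 - M1.-1)`!%:R.
  rewrite -(@bin_fact M2 k); last by rewrite /k; lia.
  have -> : (M2 - k = p.-1 - M1.-1)%N by rewrite /k; lia.
  by rewrite !natrM mulrA.
have hF1 : (M1`!%:R : 'F_p) = M1%:R * (M1.-1)`!%:R.
  by rewrite -natrM; case: (M1) h1 => // n _; rewrite factS.
have hW := @Wfact p M1.-1 pp (leq_trans (leq_pred _) h2).
rewrite prednK // natrM in hW.
have nk : (k`!%:R : 'F_p) != 0 by apply: factf_neq0 => //; rewrite /k; lia.
have nM : (M1%:R : 'F_p) != 0 by apply: natf_neq0 => //; lia.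
have ns : ((-1) ^+ k : 'F_p) != 0 by rewrite signr_eq0.
rewrite hF1 hF2.
transitivity ('C(M2, k)%:R * ((-1) ^+ M2 * (-1) ^+ M2) * ((-1) ^+ M1 *
   ((M1.-1)`!%:R * (p.-1 - M1.-1)`!%:R)) : 'F_p); last first.
  by field; rewrite nM nk ns.
rewrite sign_sq mulr1; move: hW => ->; by rewrite sign_sq mulr1.
Qed.

Lemma K2 p M1 M2 : prime p -> (0 < M1)%N -> (M1 <= p.-1)%N -> (0 < M2)%N -> (M2 <= p.-1)%N ->
  (p <= M1 + M2)%N ->
  ('C(M2.-1, M1 + M2 - p)%:R : 'F_p) = - ((-1) ^+ M2 * (-1) ^+ (M1 + M2 - p) *
    (GammaF p M1.+1 * GammaF p M2.+1 / GammaF p (M1 + M2 - p).+1) * (M2%:R)^-1).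
Proof.
move=> pp h1 h2 h1' h3 h4; have p1 := prime_gt1 pp.
set k := (M1 + M2 - p)%N.
rewrite /GammaF /=.
have hF2 : ((M2.-1)`!%:R : 'F_p) = 'C(M2.-1, k)%:R * k`!%:R * (p.-1 - M1)`!%:R.
  rewrite -(@bin_fact M2.-1 k); last by rewrite /k; lia.
  have -> : (M2.-1 - k = p.-1 - M1)%N by rewrite /k; lia.
  by rewrite !natrM mulrA.
have hF1 : (M2`!%:R : 'F_p) = M2%:R * (M2.-1)`!%:R.
  by rewrite -natrM; case: (M2) h1' => // n _; rewrite factS.
have hW := @Wfact p M1 pp h2; rewrite natrM in hW.
have nk : (k`!%:R : 'F_p) != 0 by apply: factf_neq0 => //; rewrite /k; lia.
have nM : (M2%:R : 'F_p) != 0 by apply: natf_neq0 => //; lia.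
have ns : ((-1) ^+ k : 'F_p) != 0 by rewrite signr_eq0.
rewrite hF1 hF2.
transitivity (- ('C(M2.-1, k)%:R * ((-1) ^+ M2 * (-1) ^+ M2) * ((-1) ^+ M1 *
   (M1`!%:R * (p.-1 - M1)`!%:R))) : 'F_p); last first.
  by field; rewrite nM nk ns.
rewrite sign_sq mulr1; move: hW => ->; rewrite exprS.
by rewrite mulN1r mulrN sign_sq mulrN1 opprK.
Qed.

Theorem theorem4p4 (p q m1 m2 M1 M2 : nat) :
  prime p -> prime q -> (q < p)%N -> (2 < p)%N ->
  (0 < m1)%N -> (m1 < q)%N -> (0 < m2)%N -> (m2 < q)%N ->
  (0 < M1)%N -> (M1 <= p.-1)%N ->
  (M1%:R : 'F_p) = - (m1%:R) * (q%:R)^-1 ->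
  (0 < M2)%N -> (M2 <= p.-1)%N ->
  (M2%:R : 'F_p) = - (m2%:R) * (q%:R)^-1 ->
  ((M1 + M2) %/ p)%N = 1%N ->
  let k : nat := (M1 + M2 - p)%N in
  let c : 'F_p := GammaF p M1.+1 * GammaF p M2.+1 / GammaF p k.+1 in
  I1 p M1 M2 =
    ((-1) ^+ M2 * (z2 p - z1 p) ^+ k * cst p c)
      *: (cst p (M1%:R)^-1 *: e1 p - cst p (M2%:R)^-1 *: e2 p)
  /\
  I1 p M1 M2 =
    ((-1) ^+ M1 * (z1 p - z2 p) ^+ k * cst p c)
      *: (cst p (M2%:R)^-1 *: e2 p - cst p (M1%:R)^-1 *: e1 p).
Proof.
move=> pp _ _ p2 _ _ _ _ h1 h2 _ h1' h3 _ hdiv k c.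
rewrite /c /k; clear c k.
have p0 := prime_gt0 pp.
have h4 : (p <= M1 + M2)%N.
  have := leq_trunc_div (M1 + M2) p; rewrite hdiv mul1n //.
have pR : p \in [pchar (Fz p)] by rewrite !(rmorph_pchar polyC) // pchar_Fp.
have A : (('X - (z1 p)%:P) ^+ M1.-1 * ('X - (z2 p)%:P) ^+ M2 : {poly Fz p})`_(p.-1)
    = (z1 p - z2 p) ^+ (M1 + M2 - p) *+ 'C(M2, M1 + M2 - p).
  rewrite coef_main //; try lia.
  by have -> : (M1.-1 + M2 - p.-1 = M1 + M2 - p)%N by lia.
have B : (('X - (z1 p)%:P) ^+ M1 * ('X - (z2 p)%:P) ^+ M2.-1 : {poly Fz p})`_(p.-1)
    = (z1 p - z2 p) ^+ (M1 + M2 - p) *+ 'C(M2.-1, M1 + M2 - p).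
  rewrite coef_main //; try lia.
  by have -> : (M1 + M2.-1 - p.-1 = M1 + M2 - p)%N by lia.
have cstN : forall n, (n%:R : Fz p) = cst p n%:R by move=> n; rewrite /cst !rmorph_nat.
have z21 : z2 p - z1 p = - (z1 p - z2 p) by rewrite opprB.
set G := GammaF p M1.+1 * GammaF p M2.+1 / GammaF p (M1 + M2 - p).+1.
have hA : (z1 p - z2 p) ^+ (M1 + M2 - p) *+ 'C(M2, M1 + M2 - p)
    = (-1) ^+ M2 * (z2 p - z1 p) ^+ (M1 + M2 - p) * cst p G * cst p (M1%:R)^-1.
  rewrite -mulr_natr cstN K1 //; try lia.
  rewrite /cst !rmorphM !rmorph_sign /= z21 (exprNn (z1 p - z2 p)); ring.
have hB : (z1 p - z2 p) ^+ (M1 + M2 - p) *+ 'C(M2.-1, M1 + M2 - p)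
    = - ((-1) ^+ M2 * (z2 p - z1 p) ^+ (M1 + M2 - p) * cst p G * cst p (M2%:R)^-1).
  rewrite -mulr_natr cstN K2 //; try lia.
  rewrite /cst !rmorphN !rmorphM !rmorph_sign /= z21 (exprNn (z1 p - z2 p)); ring.
have E1 : I1 p M1 M2 = ((-1) ^+ M2 * (z2 p - z1 p) ^+ (M1 + M2 - p) * cst p G)
      *: (cst p (M1%:R)^-1 *: e1 p - cst p (M2%:R)^-1 *: e2 p).
  by rewrite /I1 A B hA hB scalerBr !scalerA scaleNr.
split => //.
rewrite E1.
have podd : odd p by case: (even_prime pp) => // e; rewrite e in p2.
have ht : ((-1) ^+ M1 * (z1 p - z2 p) ^+ (M1 + M2 - p) : Fz p)
     = - ((-1) ^+ M2 * (z2 p - z1 p) ^+ (M1 + M2 - p)).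
  have hs : ((-1) ^+ M1 * (-1) ^+ (M1 + M2 - p) : Fz p) = - (-1) ^+ M2.
    have e : (M1 + (M1 + M2 - p) + p = M1.*2 + M2)%N by lia.
    have hp : ((-1) ^+ p : Fz p) = -1 by rewrite -signr_odd podd expr1.
    have := congr1 (fun n => (-1) ^+ n : Fz p) e => /=.
    rewrite !exprD hp -addnn exprD sign_sq mul1r mulrN1 => E.
    by rewrite -E opprK.
  rewrite z21 (exprNn (z1 p - z2 p)) -[RHS]mulN1r.
  have -> : (-1 : Fz p) * ((-1) ^+ M2 * ((-1) ^+ (M1 + M2 - p) * (z1 p - z2 p) ^+ (M1 + M2 - p)))
      = (- (-1) ^+ M2) * (-1) ^+ (M1 + M2 - p) * (z1 p - z2 p) ^+ (M1 + M2 - p) by ring.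
  by rewrite -hs -(mulrA ((-1) ^+ M1)) sign_sq mulr1.
by rewrite ht mulNr scaleNr -scalerN opprB.
Qed.
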